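(* For $n\geqslant 1$ and $k\geqslant 0$, let $\mathfrak{e}_{n,k}$ be the number of words of length $n$ over the alphabet $\{1,\dots,k\}$ avoiding both patterns $010$ and $120$ (not required to use every letter). Then $$\mathfrak{e}_{n,k}=\sum_{d=1}^{k}\binom{k}{d}\frac{1}{d}\binom{n-1}{d-1}\binom{n+d}{d-1}.$$
   Context: A word contains a pattern $p$ if some subsequence is order-isomorphic to $p$; otherwise it avoids $p$. Avoiding $010$: no $i<j<l$ with $\omega_i=\omega_l<\omega_j$. Avoiding $120$: no $i<j<l$ with $\omega_l<\omega_i<\omega_j$. *)

(* Defs.v *)
From mathcomp Require Import all_boot all_order all_algebra.
Set Implicit Arguments. Unset Strict Implicit. Unset Printing Implicit Defensive.

(* A word of length n over a k-letter alphabet is an n-tuple of 'I_k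
   (letters 0..k-1, order-isomorphic to {1..k}). *)

Definition contains010 (k n : nat) (w : n.-tuple 'I_k) : bool :=
  [exists i : 'I_n, exists j : 'I_n, exists l : 'I_n,
    [&& i < j, j < l, tnth w i == tnth w l & tnth w l < tnth w j]].

Definition contains120 (k n : nat) (w : n.-tuple 'I_k) : bool :=
  [exists i : 'I_n, exists j : 'I_n, exists l : 'I_n,
    [&& i < j, j < l, tnth w l < tnth w i & tnth w i < tnth w j]].

Definition avoids_010_120 (k n : nat) (w : n.-tuple 'I_k) : bool :=
  ~~ contains010 w && ~~ contains120 w.

Definition e_count (n k : nat) : nat :=
  #|[set w : n.-tuple 'I_k | avoids_010_120 w]|.

(* Main.v *)
Require Import Defs.
From mathcomp Require Import all_boot all_order all_algebra.
From mathcomp Require Import ring lra zify.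
Import GRing.Theory Num.Theory.

(* Proof outline:
   1. Combinatorics (nat scope): avoiding words are characterised by a
      recursive predicate avL; decomposing w = a x y (x letters <= a, y > a)
      gives the convolution recurrence EcS.
   2. Algebra (ring scope): the bivariate generating function satisfies
      H = t + x H (1 + H) with t = y/(1-y); the polynomials h_n (in t)
      obey a Legendre-type linear recurrence (via the ODE 2 D S' = D' S),
      which identifies them with the closed form; the map Lam realises
      t |-> y/(1-y) coefficientwise. *)


Definition headok (a : nat) (u : seq nat) : bool :=
  all (fun c => a < c) (drop (find (fun c => a < c) u) u).

Fixpoint avL (s : seq nat) : bool :=
  if s is a :: u then headok a u && avL u else true.

Lemma all_drop_of (p : pred nat) n s : all p s -> all p (drop n s).
Proof. by rewrite -{1}(cat_take_drop n s) all_cat => /andP[]. Qed.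

Lemma all_take_of (p : pred nat) n s : all p s -> all p (take n s).
Proof. by rewrite -{1}(cat_take_drop n s) all_cat => /andP[]. Qed.

Lemma headok_cat c x y : all (fun d => c < d) y -> headok c (x ++ y) = headok c x.
Proof.
move=> hy; rewrite /headok find_cat.
case: ifP => hx.
  rewrite drop_cat -has_find hx all_cat hy andbT //.
rewrite drop_cat ltnNge leq_addr /= addKn.
have -> : find (fun c0 => c < c0) x = size x.
  by apply/eqP; rewrite eqn_leq find_size /= leqNgt -has_find hx.
by rewrite drop_size /= all_drop_of.
Qed.

Lemma avL_cat a x y : all (fun c => c <= a) x -> all (fun c => a < c) y ->
  avL (x ++ y) = avL x && avL y.
Proof.
elim: x => [|c x IH] //= /andP[hc hx] hy.
rewrite headok_cat; last first.
  apply/allP => d hd; have := allP hy d hd; lia.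
by rewrite IH // andbA.
Qed.

Lemma avL_shift b v : avL (map (addn b) v) = avL v.
Proof.
elim: v => [|c v IH] //=; rewrite IH; congr (_ && _).
rewrite /headok find_map.
rewrite (@eq_find _ (preim (addn b) (fun c0 => b + c < c0)) (fun c0 => c < c0)); last first.
  by move=> d /=; rewrite ltn_add2l.
by rewrite -map_drop all_map; apply: eq_all => d /=; rewrite ltn_add2l.
Qed.

Lemma take_find_le a u : all (fun c => c <= a) (take (find (fun c => a < c) u) u).
Proof.
elim: u => [|c u IH] //=.
case: ifP => h //=. rewrite IH andbT. lia.
Qed.

Lemma find_split a u m : (m <= size u)%N ->
  all (fun c => c <= a) (take m u) -> all (fun c => a < c) (drop m u) ->
  find (fun c => a < c) u = m.
Proof.
move=> hm ht hd.
rewrite -(cat_take_drop m u) find_cat.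
have -> : has (fun c => a < c) (take m u) = false.
  apply/negbTE/hasPn => c hc; have := allP ht c hc; lia.
rewrite size_take.
have -> : (if (m < size u)%N then m else size u) = m.
  by case: ifP => //; lia.
case: (drop m u) hd => [|d y] /=; first by rewrite addn0.
by case/andP => hd _; rewrite hd addn0.
Qed.

Lemma avL_cons_split a u m : (m <= size u)%N ->
  [&& all (fun c => c <= a) (take m u), avL (take m u),
      all (fun c => a < c) (drop m u) & avL (drop m u)]
  = (m == find (fun c => a < c) u) && avL (a :: u).
Proof.
move=> hm.
apply/idP/idP.
  case/and4P=> h1 h2 h3 h4.
  rewrite (find_split a u m hm h1 h3) eqxx /= /headok (find_split a u m hm h1 h3) h3 /=.
  by rewrite -(cat_take_drop m u) (avL_cat a _ _ h1 h3) h2 h4.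
case/andP=> /eqP -> /= /andP[hh ha].
have h1 := take_find_le a u.
rewrite h1 /= -/(headok a u) hh /=.
move: ha; rewrite -{1}(cat_take_drop (find (fun c => a < c) u) u).
by rewrite (avL_cat a _ _ h1 hh).
Qed.

Definition PatS (s : seq nat) : Prop :=
  exists i j l, [/\ (i < j)%N, (j < l)%N, (l < size s)%N &
     nth 0 s l <= nth 0 s i < nth 0 s j].

Lemma headok_no a u : headok a u -> forall j l, (j < l)%N -> (l < size u)%N ->
  a < nth 0 u j -> a < nth 0 u l.
Proof.
move=> hh j l hjl hl hj.
set f := find (fun c => a < c) u.
have hf : (f <= j)%N.
  rewrite leqNgt; apply/negP => /(before_find 0) /=; rewrite hj //.
move/(all_nthP 0): hh => H.
have := H (l - f)%N; rewrite size_drop nth_drop subnKC; last by lia.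
by move=> H2; apply: H2; lia.
Qed.

Lemma headok_yes a u : ~~ headok a u -> exists j l, [/\ (j < l)%N, (l < size u)%N,
  a < nth 0 u j & nth 0 u l <= a].
Proof.
rewrite /headok; set f := find (fun c => a < c) u.
case/allPn => x hx hxa.
case/(nthP 0): hx => i hi hix.
rewrite size_drop in hi.
have hfu : (f < size u)%N by rewrite -subn_gt0; exact: leq_ltn_trans (leq0n i) hi.
have hfa : a < nth 0 u f by apply: (nth_find 0); rewrite has_find.
rewrite nth_drop in hix.
have hi0 : i != 0%N.
  apply/eqP => hi0; move: hix hxa; rewrite hi0 addn0 => <-; rewrite hfa.
  done.
clearbody f.
exists f, (f + i)%N; split => //; try lia.
  by rewrite -ltn_subRL.
by rewrite hix; move: hxa; rewrite -leqNgt.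
Qed.


Lemma avL_noPat s : avL s -> ~ PatS s.
Proof.
elim: s => [|a u IH] /=.
  by move=> _ [i [j [l [_ _ ]]]].
case/andP=> hh hu [[|i] [j [l [hij hjl hl hv]]]].
  case: j hij hjl hv => [|j] // _ hjl /= hv.
  case: l hjl hl hv => [|l] // hjl /= hl hv.
  have := headok_no a u hh j l ltac:(lia) ltac:(lia) ltac:(lia). lia.
apply: IH => //.
case: j hij hjl hv => [|j] // hij hjl hv.
case: l hjl hl hv => [|l] // hjl hl hv.
exists i, j, l; split => //; lia.
Qed.

Lemma Pat_avL s : ~~ avL s -> PatS s.
Proof.
elim: s => [|a u IH] //=.
rewrite negb_and; case/orP.
  case/headok_yes => j [l [hjl hl hj hla]].
  exists 0%N, j.+1, l.+1; split => //=; lia.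
move/IH => [i [j [l [hij hjl hl hv]]]].
exists i.+1, j.+1, l.+1; split => //=; lia.
Qed.


Fixpoint words (k n : nat) : seq (seq nat) :=
  if n is n'.+1 then flatten [seq [seq a :: u | u <- words k n'] | a <- iota 0 k]
  else [:: [::]].

Lemma count_words_S k n (P : pred (seq nat)) :
  count P (words k n.+1) = \sum_(a < k) count (fun u : seq nat => P ((a : nat) :: u)) (words k n).
Proof.
rewrite /= count_flatten sumnE !big_map.
rewrite -(big_mkord xpredT (fun a => count (fun u : seq nat => P (a :: u)) (words k n))) /index_iota subn0.
by apply: eq_bigr => a _; rewrite count_map.
Qed.

Lemma size_words k n u : u \in words k n -> size u = n.
Proof.
elim: n u => [|n IH] u /=; first by rewrite inE => /eqP ->.
case/flattenP => s /mapP [a _ ->] /mapP [v hv ->] /=.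
by rewrite IH.
Qed.

Lemma count_andb (b : bool) (Q : pred (seq nat)) s :
  count (fun u => b && Q u) s = (b * count Q s)%N.
Proof. by case: b => /=; rewrite ?mul1n ?mul0n ?count_pred0 //; elim: s. Qed.

Lemma count_andb3 (b : bool) (Q1 Q2 : pred (seq nat)) s :
  count (fun u => b && Q1 u && Q2 u) s = (b * count (fun u => Q1 u && Q2 u) s)%N.
Proof. by case: b => /=; rewrite ?mul1n ?mul0n ?count_pred0 //; elim: s. Qed.

Lemma count_split k m n (P Q : pred (seq nat)) : (m <= n)%N ->
  count (fun u => P (take m u) && Q (drop m u)) (words k n) =
  (count P (words k m) * count Q (words k (n - m)))%N.
Proof.
elim: m n P => [|m IH] n P hmn.
  rewrite subn0 /=.
  rewrite (eq_count (a2 := fun u => P [::] && Q u)); last by move=> u; rewrite take0 drop0.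
  by rewrite count_andb addn0.
case: n hmn => [|n] // hmn.
rewrite !count_words_S big_distrl /=; apply: eq_bigr => a _.
by rewrite subSS -IH.
Qed.

Lemma count_restrict k b n (P : pred (seq nat)) : (b <= k)%N ->
  count (fun u => all (fun c => c < b) u && P u) (words k n) = count P (words b n).
Proof.
move=> hb; elim: n P => [|n IH] P //=.
rewrite !count_words_S.
rewrite (big_ord_widen k (fun a => count (fun u => P (a :: u)) (words b n)) hb).
rewrite [RHS]big_mkcond /=; apply: eq_bigr => a _ /=.
rewrite count_andb3 IH; by case: (a < b)%N; rewrite ?mul1n ?mul0n.
Qed.

Lemma count_shift k b n (P : pred (seq nat)) : (b <= k)%N ->
  count (fun u => all (fun c => b <= c) u && P u) (words k n)
  = count (fun v => P (map (addn b) v)) (words (k - b) n).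
Proof.
move=> hb; elim: n P => [|n IH] P; first by [].
rewrite !count_words_S.
under eq_bigr => a _ do rewrite /= count_andb3 IH.
rewrite -(big_mkord xpredT (fun a => (b <= a) * count (fun v => P (a :: map (addn b) v)) (words (k - b) n))%N).
rewrite (@big_cat_nat _ _ _ b 0 k) //=.
rewrite big_nat_cond big1 ?add0n; last first.
  by move=> i /andP[/andP[_ hi] _]; rewrite leqNgt hi mul0n.
rewrite -{1}(add0n b) big_addn big_mkord.
apply: eq_bigr => a _ /=. by rewrite leq_addl mul1n addnC.
Qed.

Lemma count_sum (T : Type) (p : pred T) (s : seq T) : count p s = (\sum_(x <- s) (p x : nat))%N.
Proof. by elim: s => [|x s IH]; rewrite ?big_nil ?big_cons //= IH. Qed.

Definition Ec (n k : nat) : nat := count avL (words k n).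

Lemma Ec0 k : Ec 0 k = 1%N.
Proof. by []. Qed.

Lemma sum_eq_find (f : nat) (A : bool) n : (f <= n)%N ->
  (\sum_(m < n.+1) ((m == f :> nat) && A))%N = A.
Proof.
move=> hf; rewrite (bigD1 (Ordinal (n := n.+1) (m := f) hf)) //= eqxx big1 ?addn0 //.
move=> i hi; case: eqP => // hif; exfalso; move/eqP: hi; apply; apply: val_inj.
by rewrite /= hif.
Qed.

Lemma EcS n k : Ec n.+1 k =
  (\sum_(a < k) \sum_(m < n.+1) Ec m a.+1 * Ec (n - m) (k - a.+1))%N.
Proof.
rewrite /Ec count_words_S; apply: eq_bigr => a _.
have hak : (a.+1 <= k)%N by apply: ltn_ord.
transitivity (\sum_(m < n.+1) count (fun u =>
   (all (fun c => c <= a) (take m u) && avL (take m u)) &&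
   (all (fun c => a < c) (drop m u) && avL (drop m u))) (words k n))%N.
  rewrite !count_sum.
  under [in RHS]eq_bigr => m _ do rewrite count_sum.
  rewrite [RHS]exchange_big /=.
  rewrite big_seq [RHS]big_seq; apply: eq_bigr => u hu.
  have hs := size_words k n u hu.
  have -> : ((headok a u && avL u) : nat) =
    (\sum_(m < n.+1) ((m == find (fun c => a < c) u :> nat) && avL ((a:nat) :: u)))%N.
    rewrite sum_eq_find //.
    by rewrite -hs find_size.
  apply: eq_bigr => m _.
  rewrite -andbA avL_cons_split //.
  by rewrite hs -ltnS.
apply: eq_bigr => m _.
rewrite (count_split k m n (fun x => all (fun c => c <= a) x && avL x) (fun y => all (fun c => a < c) y && avL y)); last by rewrite -ltnS.
congr (_ * _)%N.
  rewrite -(count_restrict k a.+1 m avL) //.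
rewrite (count_shift k a.+1 (n - m) avL) //.
by apply: eq_count => v; rewrite avL_shift.
Qed.


Lemma sum_tuple_S (T : finType) n (F : n.+1.-tuple T -> nat) :
  (\sum_(w : n.+1.-tuple T) F w = \sum_(x : T) \sum_(w : n.-tuple T) F [tuple of x :: w])%N.
Proof.
rewrite pair_big /=.
rewrite (reindex (fun p : T * n.-tuple T => [tuple of p.1 :: p.2])) //=.
exists (fun w : n.+1.-tuple T => (thead w, [tuple of behead w])).
  move=> [x w] _ /=; rewrite theadE; congr (_, _); apply: val_inj => //.
move=> w _ /=; by rewrite -tuple_eta.
Qed.

Lemma sum_tuples k n (P : pred (seq nat)) :
  (\sum_(w : n.-tuple 'I_k) P (map val w) = count P (words k n))%N.
Proof.
elim: n P => [|n IH] P.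
  rewrite (eq_bigr (fun _ => (P [::] : nat))); last by move=> w _; rewrite tuple0.
  by rewrite sum_nat_const card_tuple expn0 mul1n /= addn0.
rewrite sum_tuple_S count_words_S.
rewrite [RHS](eq_bigr (fun a : 'I_k => \sum_(w : n.-tuple 'I_k) P ((a : nat) :: map val w))%N); last first.
  by move=> a _; rewrite -(IH (fun u => P ((a:nat) :: u))).
by [].
Qed.

Lemma pat_tuple k n (w : n.-tuple 'I_k) :
  (contains010 w || contains120 w) = ~~ avL (map val w).
Proof.
set s := map val w.
have hs : size s = n by rewrite size_map size_tuple.
have hnth : forall i : 'I_n, nth 0 s i = tnth w i.
  by move=> i; rewrite /s (nth_map (tnth w i)) ?size_tuple // -tnth_nth.
apply/idP/idP.
  move=> H; apply/negP => hav; apply: (avL_noPat s hav).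
  case/orP: H => /existsP [i /existsP [j /existsP [l /and4P [hij hjl heq hlt]]]];
    exists i, j, l; split => //; rewrite ?hs ?ltn_ord // !hnth.
    by rewrite (eqP heq) leqnn hlt.
  by rewrite (ltnW heq) hlt.
move/Pat_avL => [i [j [l [hij hjl hl hv]]]].
rewrite hs in hl.
have hi : (i < n)%N by lia.
have hj : (j < n)%N by lia.
pose I := Ordinal hi. pose J := Ordinal hj. pose L := Ordinal hl.
have eI : nth 0 s i = tnth w I by rewrite -hnth.
have eJ : nth 0 s j = tnth w J by rewrite -hnth.
have eL : nth 0 s l = tnth w L by rewrite -hnth.
rewrite eI eJ eL in hv.
case/andP: hv => h1 h2.
case: (ltngtP (tnth w L) (tnth w I)) h1 => // hc _.
  apply/orP; right; apply/existsP; exists I; apply/existsP; exists J; apply/existsP; exists L.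
  by rewrite /= hij hjl hc h2.
have E : tnth w I == tnth w L by apply/eqP/val_inj; rewrite /= hc.
apply/orP; left; apply/existsP; exists I; apply/existsP; exists J; apply/existsP; exists L.
by rewrite /= hij hjl E hc h2.
Qed.

Lemma e_count_Ec n k : e_count n k = Ec n k.
Proof.
rewrite /e_count /Ec -sum_tuples cardsE -sum1_card big_mkcond /=.
apply: eq_bigr => w _; rewrite unfold_in -negb_or pat_tuple negbK.
by case: (avL _).
Qed.

Local Open Scope ring_scope.


Definition g (n d : nat) : nat := 'C(n.-1, d.-1) * 'C(n + d, d.-1).

Lemma R1n p e : ((p - e) * (p+2) * g p.+1 e.+1 = p * (p+e+2) * g p e.+1)%N.
Proof.
rewrite /g /=.
have h1 := mul_bin_down p e.
have h2 := mul_bin_down (p+e+2) e.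
have -> : (p.+1 + e.+1 = p + e + 2)%N by lia.
have -> : (p + e.+1 = (p+e+2).-1)%N by lia.
rewrite (_ : (p + e + 2 - e = p + 2)%N) in h2; last by lia.
have -> : ((p - e) * (p + 2) * ('C(p, e) * 'C(p + e + 2, e)) =
   ((p - e) * 'C(p, e)) * ((p+2) * 'C(p + e + 2, e)))%N by lia.
rewrite -h1 -h2. lia.
Qed.

Lemma R3n m e : ((e.+1)^2 * g m e.+2 = (m.-1 - e) * (m+e+2) * g m e.+1)%N.
Proof.
rewrite /g /=.
have h1 := mul_bin_left (m.-1) e.
have h2 := mul_bin_diag (m+e+2) e.
have -> : (m + e.+2 = m + e + 2)%N by lia.
have -> : (m + e.+1 = (m+e+2).-1)%N by lia.
rewrite expnS expn1.
have -> : (e.+1 * e.+1 * ('C(m.-1, e.+1) * 'C(m + e + 2, e.+1)) =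
   (e.+1 * 'C(m.-1, e.+1)) * (e.+1 * 'C(m + e + 2, e.+1)))%N by lia.
rewrite h1 -h2. lia.
Qed.

Lemma R2n p e : ((e.+1)^2*(p+2) * g p.+1 e.+2 = p*(p+e+3)*(p+e+2) * g p e.+1)%N.
Proof.
rewrite /g /=.
have h1 := mul_bin_diag p e.
have h2 := mul_bin_diag (p+e+3) e.
have h3 := mul_bin_down (p+e+2) e.
have -> : (p.+1 + e.+2 = p + e + 3)%N by lia.
have -> : (p + e.+1 = (p+e+2).-1)%N by lia.
rewrite (_ : ((p+e+3).-1 = p + e + 2)%N) in h2; last by lia.
rewrite (_ : (p + e + 2 - e = p + 2)%N) in h3; last by lia.
rewrite expnS expn1.
have -> : (e.+1 * e.+1 * (p + 2) * ('C(p, e.+1) * 'C(p + e + 3, e.+1)) =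
   (e.+1 * 'C(p, e.+1)) * ((p+2) * (e.+1 * 'C(p + e + 3, e.+1))))%N by lia.
rewrite -h1 -h2.
have -> : (p * 'C(p.-1, e) * ((p + 2) * ((p + e + 3) * 'C(p + e + 2, e))) =
   p * 'C(p.-1, e) * (p + e + 3) * ((p + 2) * 'C(p + e + 2, e)))%N by lia.
rewrite -h3. lia.
Qed.


Definition f (n d : nat) : rat := (g n d)%:R / d%:R.

Lemma gsmall n d : (1 <= n)%N -> (n < d)%N -> g n d = 0%N.
Proof. move=> h1 h2; rewrite /g bin_small ?mul0n //; lia. Qed.

Lemma rR1 (j e : nat) : (j%:R - e%:R) * (j%:R + 3) * (g (j+2) (e+2))%:R
   = (j%:R + 1) * (j%:R + e%:R + 4) * (g (j+1) (e+2))%:R :> rat.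
Proof.
case: (leqP e j) => hej.
  have H := R1n (j+1) (e+1).
  rewrite (_ : (j+1).+1 = j+2)%N in H; last by lia.
  rewrite (_ : (e+1).+1 = e+2)%N in H; last by lia.
  move: H; move: (g (j+2) (e+2)) (g (j+1) (e+2)) => a b.
  move/(congr1 (fun x : nat => x%:R : rat)).
  rewrite !natrM natrB; last by lia.
  rewrite !natrD.
  move=> H; apply: etrans (etrans _ H) _; ring.
rewrite !gsmall ?mulr0 //; lia.
Qed.

Lemma rR3 (j e : nat) : (e%:R + 1)^+2 * (g (j+2) (e+2))%:R
   = (j%:R + 1 - e%:R) * (j%:R + e%:R + 4) * (g (j+2) (e+1))%:R :> rat.
Proof.
case: (leqP e (j+1)) => hej.
  have H := R3n (j+2) e.
  rewrite (_ : e.+2 = e+2)%N in H; last by lia.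
  rewrite (_ : e.+1 = e+1)%N in H; last by lia.
  rewrite (_ : (j+2).-1 = j + 1)%N in H; last by lia.
  move: H; move: (g (j+2) (e+2)) (g (j+2) (e+1)) => a b.
  move/(congr1 (fun x : nat => x%:R : rat)).
  rewrite !natrM natrB; last by lia.
  rewrite !natrD.
  move=> H; apply: etrans (etrans _ H) _; ring.
rewrite !gsmall ?mulr0 //; lia.
Qed.

Lemma rR2 (j e : nat) : (e%:R + 1)^+2 * (j%:R + 4) * (g (j+3) (e+2))%:R
   = (j%:R + 2) * (j%:R + e%:R + 5) * (j%:R + e%:R + 4) * (g (j+2) (e+1))%:R :> rat.
Proof.
have H := R2n (j+2) e.
rewrite (_ : e.+2 = e+2)%N in H; last by lia.
rewrite (_ : e.+1 = e+1)%N in H; last by lia.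
rewrite (_ : (j+2).+1 = j + 3)%N in H; last by lia.
move: H; move: (g (j+3) (e+2)) (g (j+2) (e+1)) => a b.
move/(congr1 (fun x : nat => x%:R : rat)).
rewrite !natrM !natrD.
move=> H; apply: etrans (etrans _ H) _; ring.
Qed.

Lemma f_rec2 (j e : nat) :
  (j%:R + 4) * f (j+3) (e+2) =
  (2 * j%:R + 5) * (f (j+2) (e+2) + 2 * f (j+2) (e+1)) - (j%:R + 1) * f (j+1) (e+2) :> rat.
Proof.
rewrite /f.
set ga := (g (j+3) (e+2))%:R. set gb := (g (j+2) (e+2))%:R.
set gc := (g (j+2) (e+1))%:R. set ge := (g (j+1) (e+2))%:R.
have h1 := rR1 j e. have h2 := rR2 j e. have h3 := rR3 j e.
rewrite -/ga -/gb -/gc -/ge in h1 h2 h3.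
set J : rat := j%:R in h1 h2 h3 *. set E : rat := e%:R in h1 h2 h3 *.
have JE0 : J + E + 4 != 0.
  by apply/eqP=> H; have := ler0n rat j; have := ler0n rat e; rewrite -/J -/E; lra.
have E10 : E + 1 != 0 by apply/eqP=> H; have := ler0n rat e; rewrite -/E; lra.
have W : (J + 4) * (E + 1) * ga - (2 * J + 5) * (E + 1) * gb
   - 2 * (2 * J + 5) * (E + 2) * gc + (J + 1) * (E + 1) * ge = 0.
  apply: (mulfI E10). apply: (mulfI JE0). rewrite !mulr0.
  have -> : (J + E + 4) * ((E + 1) * ((J + 4) * (E + 1) * ga - (2 * J + 5) * (E + 1) * gb
   - 2 * (2 * J + 5) * (E + 2) * gc + (J + 1) * (E + 1) * ge)) =
   (J + E + 4) * ((E + 1) ^+ 2 * (J + 4) * ga - (J + 2) * (J + E + 5) * (J + E + 4) * gc)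
   - (2 * J + 5) * (J + E + 4) * ((E + 1) ^+ 2 * gb - (J + 1 - E) * (J + E + 4) * gc)
   + (E + 1) ^+ 2 * ((J + 1) * (J + E + 4) * ge - (J - E) * (J + 3) * gb)
   + (J - E) * (J + 3) * ((E + 1) ^+ 2 * gb - (J + 1 - E) * (J + E + 4) * gc) by ring.
  by rewrite h1 h2 h3 !subrr !mulr0 !addr0.
have -> : (e+2)%:R = E + 2 by rewrite /E natrD.
have -> : (e+1)%:R = E + 1 by rewrite /E natrD.
apply/eqP; rewrite -subr_eq0; apply/eqP.
have E20 : E + 2 != 0 by apply/eqP=> H; have := ler0n rat e; rewrite -/E; lra.
rewrite (_ : _ - _ = ((J + 4) * (E + 1) * ga - (2 * J + 5) * (E + 1) * gb
   - 2 * (2 * J + 5) * (E + 2) * gc + (J + 1) * (E + 1) * ge) / ((E+2)*(E+1))); last by field; rewrite E20 E10.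
by rewrite W mul0r.
Qed.

Lemma f0 n : f n 0 = 0. Proof. by rewrite /f invr0 mulr0. Qed.
Lemma f1 n : f n.+1 1 = 1. Proof. by rewrite /f /g /= !bin0 divr1. Qed.

Lemma f_rec1 (j : nat) :
  (j%:R + 4) * f (j+3) 1 =
  (2 * j%:R + 5) * (f (j+2) 1 + 2 * f (j+2) 0) - (j%:R + 1) * f (j+1) 1 :> rat.
Proof. rewrite f0 !addn1 !addn2 !addn3 !f1; ring. Qed.


Definition l (n : nat) : {poly rat} := \poly_(d < n.+1) f n d.
Definition z : {poly rat} := 1 + 'X *+ 2.
Definition psi (n : nat) : {poly rat} := (1 + 'X) * l n.

Lemma coef_l n d : (0 < n)%N -> (l n)`_d = f n d.
Proof.
move=> hn; rewrite coef_poly; case: ifP => // hd.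
by rewrite /f gsmall ?mul0r //; lia.
Qed.

Lemma l_rec j : l (j+3) *+ (j+4) = (z * l (j+2)) *+ (2*j+5) - l (j+1) *+ (j+1).
Proof.
apply/polyP => d.
rewrite coefB !coefMn /z mulrDl mul1r mulrnAl coefD coefMn coefXM !coef_l; try lia.

case: d => [|[|e]].
- by rewrite !f0 !mul0rn subrr.
- have := f_rec1 j. rewrite /=. move=> H; apply: etrans (etrans _ H) _; ring.
- rewrite /=.
  have := f_rec2 j e. rewrite (_ : e.+2 = e+2)%N; last by lia.
  rewrite (_ : e.+1 = e+1)%N; last by lia.
  move=> H; apply: etrans (etrans _ H) _; ring.
Qed.

Lemma psi_rec j : psi (j+3) *+ (j+4) = (z * psi (j+2)) *+ (2*j+5) - psi (j+1) *+ (j+1).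
Proof. rewrite /psi -[((1 + 'X) * l (j+3)) *+ _]mulrnAr l_rec. ring. Qed.

Lemma l1 : l 1 = 'X.
Proof.
apply/polyP => d; rewrite coef_l // coefX.
case: d => [|[|d]]; first by rewrite f0.
  by rewrite f1.
by rewrite /f gsmall ?mul0r.
Qed.

Lemma l2 : l 2 = 'X * z.
Proof.
apply/polyP => d; rewrite coef_l // coefXM /z coefD coef1 coefMn coefX.
case: d => [|[|[|d]]]; first by rewrite f0.
- by rewrite f1.
- by rewrite /f (_ : g 2 2 = 4%N).
- by rewrite /f gsmall ?mul0r.
Qed.

Lemma psi1 : psi 1 = 'X + 'X * 'X.
Proof. rewrite /psi l1; ring. Qed.

Lemma psi2 : psi 2 = z * psi 1.
Proof. rewrite /psi l1 l2; ring. Qed.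


Fixpoint hl (n : nat) : seq {poly rat} :=
  if n is m.+1 then
    rcons (hl m) ((hl m)`_m + \sum_(i < m.+1) (hl m)`_i * (hl m)`_(m - i))
  else [:: 'X].
Definition h n := (hl n)`_n.

Lemma size_hl n : size (hl n) = n.+1.
Proof. by elim: n => //= n IH; rewrite size_rcons IH. Qed.

Lemma hl_nth n i : (i <= n)%N -> (hl n)`_i = h i.
Proof.
elim: n i => [|n IH] i hi; first by case: i hi.
rewrite leq_eqVlt in hi; case/orP: hi => [/eqP -> //|hi].
by rewrite /= nth_rcons size_hl hi IH.
Qed.

Lemma h_rec m : h m.+1 = h m + \sum_(i < m.+1) h i * h (m - i).
Proof.
rewrite {1}/h /= nth_rcons size_hl ltnn eqxx hl_nth //.
congr (_ + _); apply: eq_bigr => i _; rewrite !hl_nth //; have := ltn_ord i; lia.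
Qed.

Lemma h0 : h 0 = 'X. Proof. by []. Qed.
Lemma h1 : h 1 = 'X + 'X * 'X.
Proof. by rewrite h_rec big_ord1 h0. Qed.
Lemma h2 : h 2 = z * h 1.
Proof. rewrite h_rec !big_ord_recl big_ord0 /= h1 h0 /z. ring. Qed.

Lemma Eeq_gen (S D : {poly {poly rat}}) :
  D * S^`() *+ 2 - D^`() * S = S * (S * S - D)^`() - (S * S - D) * S^`() *+ 2.
Proof. rewrite derivB derivM. ring. Qed.

Lemma Ealt_gen (S : {poly {poly rat}}) (c : {poly rat}) :
  (1 - c%:P * 'X *+ 2 + 'X * 'X) * S^`() *+ 2 - (1 - c%:P * 'X *+ 2 + 'X * 'X)^`() * S
  = (S^`() - c%:P * ('X * S^`()) *+ 2 + 'X * ('X * S^`())) *+ 2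
    - ((- (c%:P * S)) *+ 2 + ('X * S) *+ 2).
Proof.
rewrite !derivD ?derivB ?derivN ?derivMn !derivM ?derivC ?derivX ?deriv1.
ring.
Qed.

Section ODE.
Variable N : nat.
Let Hp : {poly {poly rat}} := \poly_(k < N) h k.
Let tt : {poly {poly rat}} := ('X : {poly rat})%:P.
Let zz : {poly {poly rat}} := z%:P.
Let Sp := 1 - 'X - 'X * Hp *+ 2.
Let D := 1 - zz * 'X *+ 2 + 'X * 'X.
Let Q := 'X * (Hp * Hp) + ('X - 1) * Hp + tt.
Let E := D * Sp^`() *+ 2 - D^`() * Sp.

Lemma zzE : zz = 1 + tt *+ 2.
Proof. by rewrite /zz /z rmorphD rmorph1 rmorphMn. Qed.

Lemma SD : Sp * Sp - D = 'X * Q *+ 4.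
Proof. rewrite /Sp /D /Q zzE. ring. Qed.

Lemma HpE k : (k < N)%N -> Hp`_k = h k.
Proof. by move=> hk; rewrite coef_poly hk. Qed.

Lemma Qcoef k : (k < N)%N -> Q`_k = 0.
Proof.
move=> hk; rewrite /Q mulrBl mul1r !coefD ?coefB ?coefN !coefXM /tt coefC.
case: k hk => [|k] hk /=.
  by rewrite HpE // h0 add0r sub0r addNr.
rewrite coefM !HpE //; last by lia.
rewrite h_rec.
rewrite (eq_bigr (fun i : 'I_k.+1 => h i * h (k - i))); last first.
  move=> i _; rewrite !HpE //. lia. have := ltn_ord i. lia.
rewrite addr0. ring.
Qed.

Lemma XQcoef k : (k <= N)%N -> ('X * Q *+ 4)`_k = 0.
Proof.
move=> hk; rewrite coefMn coefXM; case: k hk => [|k] hk //=.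
  by rewrite mul0rn. by rewrite Qcoef ?mul0rn.
Qed.

Lemma Ecoef i : (i < N)%N -> E`_i = 0.
Proof.
move=> hi; rewrite /E Eeq_gen SD coefB coefMn !coefM.
rewrite big1; last first.
  move=> k _; rewrite coef_deriv XQcoef ?mul0rn ?mulr0 //.
  have := ltn_ord k. lia.
rewrite big1 ?sub0r ?mul0rn ?oppr0 //.
move=> k _; rewrite XQcoef ?mul0r //. have := ltn_ord k. lia.
Qed.

Lemma Spcoef m : (m.+1 < N)%N -> Sp`_m.+2 = - (h m.+1 *+ 2).
Proof.
move=> hm. rewrite /Sp !coefB coef1 coefX coefMn coefXM /= HpE; last by lia.
by rewrite !subr0 sub0r.
Qed.

End ODE.

Lemma h_lin j : h (j+3) *+ (j+4) = (z * h (j+2)) *+ (2*j+5) - h (j+1) *+ (j+1).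
Proof.
have := @Ecoef (j.+4.+1) j.+3 ltac:(lia).
rewrite Ealt_gen !(coefB, coefD, coefN, coefMn, coefCM, coefXM) /=.
rewrite !coef_deriv !Spcoef; try lia.
rewrite !coef1 !coefX !coef_poly /= !ltnS.
have E2 : (j <= j.+2)%N by lia. have E3 : (j <= j.+3)%N by lia.
rewrite ?E2 ?E3.
move=> H. rewrite !addn3 !addn2 !addn1.
apply/eqP; rewrite -subr_eq0; apply/eqP.
apply: (@scalerI _ _ (4%:R : rat)); first by rewrite pnatr_eq0.
rewrite scaler0 scaler_nat -oppr0 -H. ring.
Qed.

Lemma h_psi n : (0 < n)%N -> h n = psi n.
Proof.
suff K : forall m, h m.+1 = psi m.+1 /\ h m.+2 = psi m.+2.
  by case: n => // n _; case: (K n).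
elim=> [|m [IH1 IH2]].
  by rewrite h2 h1 psi2 psi1.
split=> //.
have L1 := h_lin m. have L2 := psi_rec m.
rewrite !addn3 !addn2 !addn1 in L1 L2.
rewrite IH1 IH2 -L2 in L1.
apply: (@scalerI _ _ ((m+4)%:R : rat)); first by rewrite pnatr_eq0 addn4.
by rewrite !scaler_nat.
Qed.



Lemma hockey m p : (\sum_(a < m.+1) 'C(a, p) = 'C(m.+1, p.+1))%N.
Proof.
elim: m => [|m IH]; first by rewrite big_ord1 binS bin0n /=; case: p.
by rewrite big_ord_recr /= IH [in RHS]binS.
Qed.

Lemma uv m p q :
  (\sum_(a < m.+1) 'C(a, p) * 'C(m - a, q) = 'C(m.+1, (p + q).+1))%N.
Proof.
elim: m q => [|m IH] q.
  rewrite big_ord1 /= binS !bin0n; case: p => [|p]; case: q => [|q] //=.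
case: q => [|q].
  rewrite addn0 -hockey; apply: eq_bigr => a _; by rewrite bin0 muln1.
rewrite big_ord_recr /= subnn bin0n muln0 addn0.
rewrite (eq_bigr (fun a : 'I_m.+1 => 'C(a, p) * 'C(m - a, q.+1) + 'C(a, p) * 'C(m - a, q)))%N;
  last first.
  move=> a _; rewrite subSn; last by have := ltn_ord a; lia.
  by rewrite binS mulnDr.
rewrite big_split /= !IH addnS [in RHS]binS; congr (_ + _)%N; by rewrite addnS.
Qed.

Definition Bn (k j : nat) : nat :=
  match j with 0 => (k == 0)%N | j'.+1 => match k with 0 => 0 | k'.+1 => 'C(k', j') end end.

Lemma vand k i j :
  (\sum_(a < k.+1) Bn a i * Bn (k - a) j = Bn k (i + j))%N.
Proof.
case: i => [|i].
  rewrite big_ord_recl /= subn0 mul1n big1 ?addn0 // => a _; by rewrite /= mul0n.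
case: j => [|j].
  rewrite big_ord_recr /= subnn muln1 big1 ?addn0 //.
  move=> a _; rewrite (_ : k - a = (k - a).-1.+1)%N /= ?muln0 //.
  have := ltn_ord a. lia.
case: k => [|k].
  by rewrite big_ord1 /=.
rewrite big_ord_recl /= mul0n add0n.
case: k => [|k].
  by rewrite big_ord1 /= muln0 addnS.
rewrite big_ord_recr /= subnn muln0 addn0.
rewrite (eq_bigr (fun a : 'I_k.+1 => 'C(a, i) * 'C(k - a, j)))%N; last first.
  move=> a _; rewrite /bump /= !add1n subSS subSn //.
  have := ltn_ord a. lia.
by rewrite uv addnS.
Qed.

Definition Lam (k : nat) (p : {poly rat}) : rat := \sum_(j < size p) p`_j * (Bn k j)%:R.

Lemma LamE M k (p : {poly rat}) : (size p <= M)%N -> Lam k p = \sum_(j < M) p`_j * (Bn k j)%:R.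
Proof.
move=> hM; rewrite /Lam (big_ord_widen M (fun j => p`_j * (Bn k j)%:R) hM) big_mkcond /=.
apply: eq_bigr => j _; case: ifP => // /negbT; rewrite -leqNgt => hj.
by rewrite nth_default ?mul0r.
Qed.

Lemma Lam0 k : Lam k 0 = 0.
Proof. by rewrite /Lam size_poly0 big_ord0. Qed.

Lemma LamD k (p q : {poly rat}) : Lam k (p + q) = Lam k p + Lam k q.
Proof.
set M := maxn (size p) (size q).
rewrite (LamE M k (p + q)) ?size_polyD // (LamE M k p) ?leq_maxl //.
rewrite (LamE M k q) ?leq_maxr // -big_split /=.
by apply: eq_bigr => j _; rewrite coefD mulrDl.
Qed.

Lemma LamZ k c (p : {poly rat}) : Lam k (c *: p) = c * Lam k p.
Proof.
rewrite (LamE (size p) k (c *: p)) ?size_scale_leq // /Lam mulr_sumr.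
by apply: eq_bigr => j _; rewrite coefZ mulrA.
Qed.

Lemma Lam_sum k (I : Type) (r : seq I) (P : pred I) (F : I -> {poly rat}) :
  Lam k (\sum_(i <- r | P i) F i) = \sum_(i <- r | P i) Lam k (F i).
Proof. exact: (big_morph (Lam k) (LamD k) (Lam0 k)). Qed.

Lemma LamXn k i : Lam k 'X^i = (Bn k i)%:R.
Proof.
rewrite /Lam size_polyXn big_ord_recr /= coefXn eqxx mul1r big1 ?add0r //.
move=> j _; rewrite coefXn (_ : (j == i :> nat) = false) ?mul0r //.
apply/negbTE; have := ltn_ord j; rewrite neq_ltn => ->; done.
Qed.

Lemma Lam0p (p : {poly rat}) : Lam 0 p = p`_0.
Proof.
rewrite (LamE (size p).+1 0 p) // big_ord_recl /= mulr1 big1 ?addr0 //.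
by move=> j _; rewrite mulr0.
Qed.

Lemma LamM k (p q : {poly rat}) :
  Lam k (p * q) = \sum_(a < k.+1) Lam a p * Lam (k - a) q.
Proof.
rewrite -[p]coefK -[q]coefK !poly_def.
set P := size p. set Q := size q.
have -> : (\sum_(i < P) p`_i *: 'X^i) * (\sum_(i < Q) q`_i *: 'X^i)
  = \sum_(i < P) \sum_(j < Q) (p`_i * q`_j) *: 'X^(i + j).
  rewrite mulr_suml; apply: eq_bigr => i _; rewrite mulr_sumr; apply: eq_bigr => j _.
  by rewrite -scalerAl -scalerAr scalerA exprD.
rewrite Lam_sum.
under eq_bigr => i _ do rewrite Lam_sum.
symmetry. rewrite [X in X = _](eq_bigr (fun a : 'I_k.+1 => Lam a (\sum_(i < P) p`_i *: 'X^i) * Lam (k - a) (\sum_(i < Q) q`_i *: 'X^i))) //. under eq_bigr => a _ do rewrite Lam_sum.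
under eq_bigr => a _ do rewrite Lam_sum.
under eq_bigr => a _ do rewrite mulr_suml.
under eq_bigr => a _ do under eq_bigr => i _ do rewrite mulr_sumr.
rewrite exchange_big /=; apply: eq_bigr => i _.
rewrite exchange_big /=; apply: eq_bigr => j _.
rewrite LamZ LamXn -vand natr_sum mulr_sumr; apply: eq_bigr => a _.
by rewrite !LamZ !LamXn natrM; ring.
Qed.


Lemma h_coef0 n : (h n)`_0 = 0.
Proof.
case: n => [|n]; first by rewrite h0 coefX.
by rewrite h_psi // /psi coef0M coef_l // f0 mulr0.
Qed.

Lemma LamNat k b : Lam k (b%:R) = b%:R * (Bn k 0)%:R.
Proof. by rewrite -(expr0 'X) -scaler_nat LamZ LamXn. Qed.


Lemma Lam_h n k : (0 < n)%N -> Lam k (h n) = \sum_(d < n.+1) f n d * 'C(k, d)%:R.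
Proof.
move=> hn; rewrite h_psi // /psi /l poly_def mulr_sumr Lam_sum.
apply: eq_bigr => d _.
rewrite -scalerAr mulrDl mul1r -exprS LamZ LamD !LamXn.
case: d => [[|d] hd] /=; first by rewrite f0 !mul0r.
congr (_ * _).
by case: k => [|k] //=; rewrite -natrD addnC -binS.
Qed.

Section Count.
Variable e : nat -> nat -> nat.
Hypothesis e0 : forall k, e 0 k = 1%N.
Hypothesis eS : forall n k, e n.+1 k =
  (\sum_(a < k) \sum_(m < n.+1) e m a.+1 * e (n - m) (k - a.+1))%N.

Lemma e_h n k : (e n k)%:R = Lam k (h n + (n == 0%N)%:R).
Proof.
elim: n {-2}n (leqnn n) k => [|N IH] n hn k.
  have -> : n = 0%N by lia.
  rewrite e0 h0 LamD LamNat -(expr1 'X) LamXn /=.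
  by case: k => [|k] /=; rewrite ?bin0 //; rewrite mul1r.
case: n hn => [|n] hn.
  rewrite e0 h0 LamD LamNat -(expr1 'X) LamXn /=.
  by case: k => [|k] /=; rewrite ?bin0 //; rewrite mul1r.
rewrite eS natr_sum /= addr0 h_rec.
have -> : h n + \sum_(i < n.+1) h i * h (n - i) =
   \sum_(i < n.+1) h i * (h (n - i)%N + ((n - i)%N == 0%N)%:R).
  rewrite big_ord_recr /= subnn /= [in RHS]big_ord_recr /= subnn /=.
  have -> : \sum_(i < n) h i * (h (n - i)%N + ((n - i)%N == 0%N)%:R) = \sum_(i < n) h i * h (n - i)%N.
    apply: eq_bigr => i _; rewrite (_ : ((n - i)%N == 0%N) = false) ?addr0 //.
    have := ltn_ord i; lia.
  rewrite mulrDr mulr1; ring.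
rewrite Lam_sum.
under [in RHS]eq_bigr => m _ do rewrite LamM big_ord_recl Lam0p h_coef0 mul0r add0r.
rewrite exchange_big /=; apply: eq_bigr => a _.
rewrite natr_sum; apply: eq_bigr => m _.
rewrite natrM !IH; try (have := ltn_ord m; lia).
rewrite LamD LamNat mulr0 addr0 /bump /= add1n.
by [].
Qed.

Theorem e_formula n k : (1 <= n)%N ->
  (e n k)%:R =
  \sum_(1 <= d < k.+1)
     ('C(k, d)%:R * (d%:R)^-1 * 'C(n.-1, d.-1)%:R * 'C(n + d, d.-1)%:R : rat).
Proof.
move=> hn.
rewrite e_h (_ : (n == 0)%N = false); last by lia.
rewrite addr0 Lam_h //.
set F := fun d : nat => f n d * 'C(k, d)%:R.
have FE : forall d, 'C(k, d)%:R * (d%:R)^-1 * 'C(n.-1, d.-1)%:R * 'C(n + d, d.-1)%:R = F d.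
  by move=> d; rewrite /F /f /g natrM; ring.
under [in RHS]eq_bigr => d _ do rewrite FE.
have -> : \sum_(1 <= d < k.+1) F d = \sum_(d < k.+1) F d.
  rewrite -(big_mkord xpredT F) big_nat_recl // /F f0 mul0r add0r big_add1 /=.
  done.
rewrite (big_ord_widen (n + k).+1 F) ?ltnS ?leq_addr //.
rewrite [RHS](big_ord_widen (n + k).+1 F) ?ltnS ?leq_addl //.
rewrite big_mkcond [RHS]big_mkcond /=; apply: eq_bigr => d _.
case: ifP => h1; case: ifP => h2 //.
  by rewrite /F bin_small ?mulr0 //; lia.
by rewrite /F /f gsmall ?mul0r //; lia.
Qed.

End Count.

Theorem mainTheorem6 (n k : nat) (hn : (1 <= n)%N) :
  (e_count n k)%:R =
  \sum_(1 <= d < k.+1)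
     ('C(k, d)%:R * (d%:R)^-1 * 'C(n.-1, d.-1)%:R * 'C(n + d, d.-1)%:R : rat).
Proof.
rewrite e_count_Ec.
exact: (@e_formula Ec Ec0 EcS n k hn).
Qed.
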